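(* Given an arbitrary sequence of instances $\{\mathcal{I}_N\}_{N=1}^{\infty}$ and an arbitrary regular strategy profile sequence $\{\Sigma_{N}\}_{N=1}^{\infty}$, let $\{A(\Sigma_{N})\}_{N=1}^{\infty}$ be the sequence of the fidelities of $\Sigma_N$. (1) If $\lim_{N\to \infty} A(\Sigma_{N}) = 1$, then for every $N$, $\Sigma_{N}$ is an $\varepsilon$-strong Bayes Nash Equilibrium with $\varepsilon = o(1)$. (2) If $\lim_{N\to \infty} A(\Sigma_{N}) = 1$ does not hold, then there exist infinitely many $N$ such that $\Sigma_{N}$ is NOT an $\varepsilon$-strong Bayes Nash Equilibrium for some constant $\varepsilon>0$.
   Context: Binary voting model. $N$ agents vote for one of two alternatives $\mathbf{A}$ (accept) and $\mathbf{R}$ (reject). There are two world states $L,H$ with common prior $P_L=\Pr[W=L]>0$, $P_H=\Pr[W=H]>0$; the state is not observed. Each agent receives a private signal in $\{l,h\}$, i.i.d. conditioned on the state, with $P_{sw}=\Pr[\text{signal}=s\mid W=w]$ common knowledge and $P_{hH}>P_{hL}$, $P_{lH}<P_{lL}$. Majority vote with threshold $\mu$: $\mathbf{A}$ wins iff at least $\mu N$ agents vote for $\mathbf{A}$. Each agent $n$ has utility $v_n:\{L,H\}\times\{\mathbf{A},\mathbf{R}\}\to\{0,1,\dots,B\}$ ($B$ a positive integer) with $v_n(H,\mathbf{A})>v_n(L,\mathbf{A})$ and $v_n(H,\mathbf{R})<v_n(L,\mathbf{R})$. Friendly agents satisfy $v_n(H,\mathbf{A})>v_n(L,\mathbf{A})>v_n(L,\mathbf{R})>v_n(H,\mathbf{R})$;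 unfriendly agents satisfy $v_n(L,\mathbf{R})>v_n(H,\mathbf{R})>v_n(H,\mathbf{A})>v_n(L,\mathbf{A})$; contingent agents satisfy $v_n(H,\mathbf{A})>v_n(H,\mathbf{R})$ and $v_n(L,\mathbf{R})>v_n(L,\mathbf{A})$. There are $\lfloor\alpha_F N\rfloor$ friendly, $\lfloor\alpha_U N\rfloor$ unfriendly and the rest contingent agents, with $\alpha_F,\alpha_U,\alpha_C$ fixed and common knowledge; neither friendly nor unfriendly agents alone can determine the outcome, so the informed majority decision is $\mathbf{A}$ in state $H$ and $\mathbf{R}$ in state $L$. A (mixed) strategy maps the signal to a probability of voting $\mathbf{A}$; a strategy profile is regular if all friendly agents always vote $\mathbf{A}$ and all unfriendly agents always vote $\mathbf{R}$. With $\lambda_w^{\mathbf{A}}(\Sigma)$, $\lambda_w^{\mathbf{R}}(\Sigma)$ the ex-ante probabilities that $\mathbf{A}$, resp. $\mathbf{R}$, wins in state $w$, the fidelity is $A(\Sigma)=P_L\lambda_L^{\mathbf{R}}(\Sigma)+P_H\lambda_H^{\mathbf{A}}(\Sigma)$ and the ex-ante expected utility is $u_n(\Sigma)=\sum_{w\in\{L,H\}}P_w(\lambda_w^{\mathbf{A}}(\Sigma)v_n(w,\mathbf{A})+\lambda_w^{\mathbf{R}}(\Sigma)v_n(w,\mathbf{R}))$. A sequence of instances $\{\mathcal{I}_N\}$ shares $\mu$, prior, signal distribution and type fractions (utilities may vary arbitrarily with $N$); $\Sigma_N$ is a profile in $\mathcal{I}_N$. A profile $\Sigma$ is an $\varepsilon$-strong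 Bayes Nash Equilibrium if there is no coalition $D$ and profile $\Sigma'$ agreeing with $\Sigma$ outside $D$ such that $u_n(\Sigma')\ge u_n(\Sigma)$ for all $n\in D$ and $u_n(\Sigma')>u_n(\Sigma)+\varepsilon$ for some $n\in D$. *)

(* Defs.v *)
From HB Require Import structures.
From mathcomp Require Import all_boot all_order all_algebra.
From mathcomp Require Import all_classical all_reals all_analysis.
Set Implicit Arguments. Unset Strict Implicit. Unset Printing Implicit Defensive.
Import Order.TTheory GRing.Theory Num.Theory.
Local Open Scope ring_scope.

Inductive world := L | H.
Inductive alt := Acc | Rej.

(* Signals: [true] = h, [false] = l. *)
Definition signal := bool.

Section Model.
Variable R : realType.

Definition utility_fn := world -> alt -> nat.

Definition basic_util (v : utility_fn) : Prop :=
  (v H Acc > v L Acc)%N /\ (v H Rej < v L Rej)%N.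

Definition friendly (v : utility_fn) : Prop :=
  (v H Acc > v L Acc)%N /\ (v L Acc > v L Rej)%N /\ (v L Rej > v H Rej)%N.
Definition unfriendly (v : utility_fn) : Prop :=
  (v L Rej > v H Rej)%N /\ (v H Rej > v H Acc)%N /\ (v H Acc > v L Acc)%N.
Definition contingent (v : utility_fn) : Prop :=
  (v H Acc > v H Rej)%N /\ (v L Rej > v L Acc)%N.

Definition instance_ok (aF aU : R) (B N : nat) (v : 'I_N -> utility_fn) : Prop :=
  (forall n w a, (v n w a <= B)%N) /\
  (forall n, basic_util (v n)) /\
  (forall n, friendly (v n) \/ unfriendly (v n) \/ contingent (v n)) /\
  (#|[set n : 'I_N | `[< friendly (v n) >]]|%:Z = Num.floor (aF * N%:R)) /\
  (#|[set n : 'I_N | `[< unfriendly (v n) >]]|%:Z = Num.floor (aU * N%:R)).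

(* A (mixed) strategy profile: sigma n s = probability that agent n votes A
   on receiving signal s. *)
Definition profile (N : nat) := 'I_N -> signal -> R.

Definition valid_profile N (sigma : profile N) : Prop :=
  forall n s, 0 <= sigma n s <= 1.

Definition regular N (v : 'I_N -> utility_fn) (sigma : profile N) : Prop :=
  forall n, (friendly (v n) -> forall s, sigma n s = 1) /\
            (unfriendly (v n) -> forall s, sigma n s = 0).

(* Pr[signal = h | W = w]; Pr[signal = l | W = w] = 1 - this. *)
Definition Ph (PhL PhH : R) (w : world) : R :=
  match w with L => PhL | H => PhH end.

Definition pvoteA (PhL PhH : R) (w : world) (s : signal -> R) : R :=
  Ph PhL PhH w * s true + (1 - Ph PhL PhH w) * s false.

Definition lambdaA (mu PhL PhH : R) N (sigma : profile N) (w : world) : R :=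
  \sum_(S : {set 'I_N} | mu * N%:R <= #|S|%:R)
     (\prod_(i in S) pvoteA PhL PhH w (sigma i)) *
     (\prod_(i in ~: S) (1 - pvoteA PhL PhH w (sigma i))).

Definition lambdaR (mu PhL PhH : R) N (sigma : profile N) (w : world) : R :=
  1 - lambdaA mu PhL PhH sigma w.

Definition prior (PL PH : R) (w : world) : R :=
  match w with L => PL | H => PH end.

Definition fidelity (mu PL PH PhL PhH : R) N (sigma : profile N) : R :=
  PL * lambdaR mu PhL PhH sigma L + PH * lambdaA mu PhL PhH sigma H.

Definition exp_util (mu PL PH PhL PhH : R) N (v : 'I_N -> utility_fn)
  (sigma : profile N) (n : 'I_N) : R :=
  \sum_(w <- [:: L; H])
    prior PL PH w * (lambdaA mu PhL PhH sigma w * (v n w Acc)%:R +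
                     lambdaR mu PhL PhH sigma w * (v n w Rej)%:R).

Definition strong_BNE (mu PL PH PhL PhH : R) N (v : 'I_N -> utility_fn)
  (sigma : profile N) (eps : R) : Prop :=
  ~ exists (D : {set 'I_N}) (sigma' : profile N),
      [/\ valid_profile sigma',
          (forall n, n \notin D -> sigma' n = sigma n),
          (forall n, n \in D ->
             exp_util mu PL PH PhL PhH v sigma n <= exp_util mu PL PH PhL PhH v sigma' n) &
          (exists2 n, n \in D &
             exp_util mu PL PH PhL PhH v sigma n + eps < exp_util mu PL PH PhL PhH v sigma' n)].

End Model.

(* Main.v *)
Require Import Defs.
From HB Require Import structures.
From mathcomp Require Import all_boot all_order all_algebra.
From mathcomp Require Import all_classical all_reals all_analysis.
From mathcomp Require Import ring lra.
Import Order.TTheory GRing.Theory Num.Theory.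
Import numFieldNormedType.Exports.
Local Open Scope classical_set_scope.
Local Open Scope ring_scope.
Set Implicit Arguments. Unset Strict Implicit.

Section Gen.
Variables (R : realType) (I : finType).
Implicit Types (p q : I -> R) (S : {set I}).

Definition Qp p S := \prod_(i in S) p i * \prod_(i in ~: S) (1 - p i).
Definition Fk (k : R) p := \sum_(S : {set I} | k <= #|S|%:R) Qp p S.

Lemma QpE p S : Qp p S = \prod_i (if i \in S then p i else 1 - p i).
Proof.
rewrite /Qp [RHS](bigID (mem S)) /=; congr (_ * _); apply: eq_big => i //=.
- by move=> hi; rewrite hi.
- by rewrite inE.
- by rewrite inE => /negbTE ->.
Qed.

Lemma expect_prod p (g : I -> bool -> R) :
  \sum_(S : {set I}) Qp p S * \prod_i g i (i \in S) =
  \prod_i (p i * g i true + (1 - p i) * g i false).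
Proof.
rewrite bigA_distr.
apply: eq_bigr => S _; rewrite QpE -big_split /=; apply: eq_bigr => i _.
by case: (i \in S).
Qed.

Definition unit01 p := forall i, 0 <= p i <= 1.

Lemma Qp_ge0 p S : unit01 p -> 0 <= Qp p S.
Proof.
move=> hp; rewrite QpE; apply: prodr_ge0 => i _.
by case: (i \in S); have := hp i; lra.
Qed.

Lemma Qp_sum1 p : \sum_(S : {set I}) Qp p S = 1.
Proof.
transitivity (\sum_(S : {set I}) Qp p S * \prod_(i : I) (fun _ _ => (1:R)) i (i \in S)).
  by apply: eq_bigr => S _; rewrite big1_eq mulr1.
rewrite (expect_prod p (fun _ _ => 1)); apply: big1 => i _; lra.
Qed.

Lemma Fk_ge0 k p : unit01 p -> 0 <= Fk k p.
Proof. by move=> hp; apply: sumr_ge0 => S _; exact: Qp_ge0. Qed.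

Lemma sum_cond_le (P : pred {set I}) (F : {set I} -> R) :
  (forall S, 0 <= F S) -> \sum_(S | P S) F S <= \sum_S F S.
Proof.
move=> hF; rewrite [leRHS](bigID P) /= lerDl; apply: sumr_ge0 => *; exact: hF.
Qed.

Lemma Fk_le1 k p : unit01 p -> Fk k p <= 1.
Proof.
move=> hp; rewrite -(Qp_sum1 p); apply: sum_cond_le => S; exact: Qp_ge0.
Qed.

Lemma Fk_compl k p : 1 - Fk k p = \sum_(S : {set I} | ~~ (k <= #|S|%:R)) Qp p S.
Proof. rewrite -{1}(Qp_sum1 p) (bigID (fun S : {set I} => k <= #|S|%:R)) /=. by rewrite /Fk addrAC subrr add0r. Qed.


Lemma prod_if1 (X : I -> R) j : \prod_i (if i == j then X i else 1) = X j.
Proof. by rewrite -big_mkcond big_pred1_eq. Qed.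

Lemma cross p i j :
  \sum_(S : {set I}) Qp p S * (((i \in S)%:R - p i) * ((j \in S)%:R - p j)) =
  if i == j then p i * (1 - p i) else 0.
Proof.
pose g := fun k (b : bool) => (if k == i then b%:R - p k else 1) *
                     (if k == j then b%:R - p k else 1).
have E : forall S : {set I}, \prod_k g k (k \in S) =
   ((i \in S)%:R - p i) * ((j \in S)%:R - p j).
  by move=> S; rewrite /g big_split /= (prod_if1 (fun k => (k \in S)%:R - p k))
     (prod_if1 (fun k => (k \in S)%:R - p k)).
have := expect_prod p g.
have -> : \sum_(S : {set I}) Qp p S * \prod_k g k (k \in S) =
  \sum_(S : {set I}) Qp p S * (((i \in S)%:R - p i) * ((j \in S)%:R - p j)).
  by apply: eq_bigr => S _; rewrite E.
move=> ->; rewrite /g.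
case: eqP => [<-|/eqP hij].
- rewrite (bigD1 i) //= big1 ?mulr1; first by rewrite eqxx /=; ring.
  by move=> k /negbTE hk; rewrite hk /=; ring.
- rewrite (bigD1 i) //= eqxx (negbTE hij) /=.
  rewrite [X in X * _](_ : _ = 0) ?mul0r //; ring.
Qed.

Lemma var_eq p :
  \sum_(S : {set I}) Qp p S * (#|S|%:R - \sum_i p i)^+2 = \sum_i p i * (1 - p i).
Proof.
have cardE (S : {set I}) : #|S|%:R - \sum_i p i = \sum_i ((i \in S)%:R - p i).
  rewrite sumrB; congr (_ - _).
  rewrite -sum1_card natr_sum big_mkcond /=; apply: eq_bigr => i _.
  by case: (i \in S).
transitivity (\sum_(S : {set I}) \sum_i \sum_j
    Qp p S * (((i \in S)%:R - p i) * ((j \in S)%:R - p j))).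
  apply: eq_bigr => S _; rewrite cardE expr2 mulr_suml mulr_sumr.
  apply: eq_bigr => i _; rewrite mulr_sumr mulr_sumr.
  by apply: eq_bigr => j _.
rewrite exchange_big; apply: eq_bigr => i _; rewrite exchange_big /=.
under eq_bigr do rewrite cross.
rewrite (bigD1 i) //= eqxx big1 ?addr0 // => j.
by rewrite eq_sym => /negbTE ->.
Qed.

Lemma cheb p (P : pred {set I}) t : unit01 p -> 0 < t ->
  (forall S, P S -> t^+2 <= (#|S|%:R - \sum_i p i)^+2) ->
  \sum_(S | P S) Qp p S <= (\sum_i p i * (1 - p i)) / t^+2.
Proof.
move=> hp ht hP.
rewrite ler_pdivlMr ?exprn_gt0 // -var_eq mulr_suml.
apply: (@le_trans _ _ (\sum_(S | P S) Qp p S * (#|S|%:R - \sum_i p i)^+2)).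
  apply: ler_sum => S PS; apply: ler_wpM2l; [exact: Qp_ge0 | exact: hP].
apply: sum_cond_le => S; apply: mulr_ge0; [exact: Qp_ge0 | exact: sqr_ge0].
Qed.

Lemma var_le p : unit01 p -> \sum_i p i * (1 - p i) <= #|I|%:R.
Proof.
move=> hp; rewrite -sum1_card natr_sum; apply: ler_sum => i _.
have := hp i; nra.
Qed.


Lemma Fk_mono1 k p q i : unit01 p -> unit01 q ->
  (forall j, j != i -> q j = p j) -> p i <= q i -> Fk k p <= Fk k q.
Proof.
move=> hp hq hpq hi.
pose u (S : {set I}) : R := if k <= #|S|%:R then 1 else 0.
have FkE r : Fk k r = \sum_(S : {set I}) u S * Qp r S.
  rewrite /Fk big_mkcond; apply: eq_bigr => S _; rewrite /u.
  by case: ifP; rewrite ?mul1r ?mul0r.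
pose Rr (S : {set I}) := \prod_(j | j != i) (if j \in S then p j else 1 - p j).
have Qsplit r : (forall j, j != i -> r j = p j) -> forall S,
    Qp r S = (if i \in S then r i else 1 - r i) * Rr S.
  move=> hr S; rewrite QpE (bigD1 i) //=; congr (_ * _).
  by apply: eq_bigr => j hj; rewrite hr.
pose sg (S : {set I}) : R := if i \in S then 1 else -1.
have Ediff : Fk k q - Fk k p = (q i - p i) * \sum_(S : {set I}) u S * sg S * Rr S.
  rewrite !FkE -sumrB mulr_sumr; apply: eq_bigr => S _.
  rewrite (Qsplit q) // (Qsplit p) // /sg; case: (i \in S); ring.
have Rr_ge0 S : 0 <= Rr S.
  by apply: prodr_ge0 => j _; case: (j \in S); have := hp j; lra.
pose T (S : {set I}) := if i \in S then S :\ i else i |: S.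
have TK : involutive T.
  move=> S; rewrite /T; case hS: (i \in S).
  - by rewrite finset.setD11 finset.setD1K.
  - by rewrite finset.setU11 finset.setU1K // hS.
have RT S : Rr (T S) = Rr S.
  apply: eq_bigr => j hj; rewrite /T; case: (i \in S).
  - by rewrite in_setD1 hj.
  - by rewrite in_setU1 (negbTE hj).
have sgT S : sg (T S) = - sg S.
  rewrite /sg /T; case hS: (i \in S); first by rewrite finset.setD11.
  by rewrite finset.setU11 opprK.
have uT S : 0 <= (u S - u (T S)) * sg S.
  rewrite /u /sg /T; case hS: (i \in S).
  - have hc : (#|S :\ i| <= #|S|)%N by apply: subset_leq_card; apply: finset.subD1set.
    case: ifP => h1; case: ifP => h2; rewrite ?subrr ?mul0r //; try lra.
    by move: h1; rewrite (le_trans h2) // ler_nat.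
  - have hc : (#|S| <= #|i |: S|)%N by apply: subset_leq_card; apply: finset.subsetUr.
    case: ifP => h1; case: ifP => h2; rewrite ?subrr ?mul0r //; try lra.
    by move: h2; rewrite (le_trans h1) // ler_nat.
have Phi2 : 0 <= \sum_(S : {set I}) u S * sg S * Rr S.
  have E2 : \sum_(S : {set I}) u S * sg S * Rr S =
      - \sum_(S : {set I}) u (T S) * sg S * Rr S.
    rewrite (reindex_inj (can_inj TK)) /= -sumrN; apply: eq_bigr => S _.
    by rewrite sgT RT; ring.
  suff : 0 <= \sum_(S : {set I}) u S * sg S * Rr S + \sum_(S : {set I}) u S * sg S * Rr S by lra.
  rewrite {2}E2 -sumrB; apply: sumr_ge0 => S _.
  rewrite -mulrBl -mulrBl; apply: mulr_ge0 => //.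
suff : 0 <= Fk k q - Fk k p by lra.
rewrite Ediff; apply: mulr_ge0 => //; lra.
Qed.


Lemma Fk_mono k p q : unit01 p -> unit01 q -> (forall j, p j <= q j) ->
  Fk k p <= Fk k q.
Proof.
move=> hp hq hpq.
pose h (n : nat) j := if (enum_rank j < n)%N then q j else p j.
have hu n : unit01 (h n) by move=> j; rewrite /h; case: ifP.
have step n : Fk k (h n) <= Fk k (h n.+1).
  case: (ltnP n #|I|) => hn.
  - pose i := enum_val (Ordinal hn).
    have ri : enum_rank i = Ordinal hn by rewrite /i enum_valK.
    apply: (@Fk_mono1 k (h n) (h n.+1) i) => //.
    + move=> j hj; rewrite /h ltnS leq_eqVlt.
      case: eqP => //= hjn; exfalso; move/negP: hj; apply.
      have : enum_rank j = Ordinal hn by apply: val_inj.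
      by move=> /(congr1 enum_val); rewrite enum_rankK => ->.
    + by rewrite /h ri /= ltnn ltnSn.
  - have -> : h n.+1 = h n.
      apply: funext => j; rewrite /h.
      have hj : (enum_rank j < n)%N by apply: (leq_trans (ltn_ord _)).
      by rewrite hj (leq_trans hj (leqnSn n)).
    by [].
have hall n : Fk k p <= Fk k (h n).
  elim: n => [|n IH]; last exact: le_trans IH (step n).
  have -> : h 0%N = p by apply: funext => j.
  by [].
have -> : q = h #|I|.
  by apply: funext => j; rewrite /h ltn_ord.
exact: hall.
Qed.

End Gen.
Section Ar.
Variable R : realFieldType.
Implicit Types X Y d a b c e Bn : R.

Lemma h1 X d a Bn : -d <= X -> 0 <= d -> -Bn <= a -> a <= 0 -> X * a <= Bn * d.
Proof. move=> *; case: (lerP 0 X) => hX; nra. Qed.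

Lemma h2 Y d b Bn : Y <= d -> 0 <= d -> 0 <= b -> b <= Bn -> Y * b <= Bn * d.
Proof. move=> *; case: (lerP 0 Y) => hY; nra. Qed.

Lemma g_cont X Y d a b Bn : -d <= X -> Y <= d -> 0 <= d ->
  -Bn <= a -> a <= 0 -> 0 <= b -> b <= Bn ->
  X * a + Y * b <= (Bn * Bn + 2 * Bn) * d.
Proof.
move=> hX hY hd ha ha0 hb hb1.
have := h1 hX hd ha ha0; have := h2 hY hd hb hb1.
have : 0 <= Bn * Bn * d by apply: mulr_ge0 => //; nra.
lra.
Qed.

Lemma g_fr_cont X Y d a b c e Bn : -d <= X -> Y <= d -> 0 <= d ->
  0 <= a -> a <= Bn -> 0 <= b -> b <= Bn ->
  c <= -1 -> 1 <= e -> e <= Bn -> 0 <= X * c + Y * e ->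
  X * a + Y * b <= (Bn * Bn + 2 * Bn) * d.
Proof.
move=> hX hY hd ha0 ha1 hb0 hb1 hc he he1 hnl.
have e2 := h2 hY hd hb0 hb1.
have e3 := h2 hY hd (le_trans ler01 he) he1.
have hB : 0 <= Bn by lra.
have : X * a <= Bn * Bn * d.
  case: (lerP X 0) => hX0; first by nra.
  have hXle : X <= Bn * d by nra.
  have : X * a <= X * Bn by nra.
  have : X * Bn <= Bn * d * Bn by nra.
  lra.
have : 0 <= Bn * d by nra.
lra.
Qed.

Lemma g_fr_un X Y d a b c e Bn : -d <= X -> Y <= d -> 0 <= d ->
  0 <= a -> a <= b -> b <= Bn ->
  c <= e -> e <= -1 -> 0 <= X * c + Y * e ->
  X * a + Y * b <= (Bn * Bn + 2 * Bn) * d.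
Proof.
move=> hX hY hd ha hab hb hce he hnl.
have hB : 0 <= Bn by lra.
have : 0 <= Bn * Bn * d by apply: mulr_ge0 => //; nra.
have : 0 <= Bn * d by nra.
case: (lerP 0 Y) => hY0.
- have e2 := h2 hY hd (le_trans ha hab) hb.
  have : X <= 0 by nra.
  nra.
- case: (lerP X 0) => hX0; first by nra.
  have h1' : X * (- c) <= (- Y) * (- e) by nra.
  have k1 : X * (- c) * a <= (- Y) * (- e) * a by apply: ler_wpM2r.
  have k2a : (- e) * a <= (- c) * b by nra.
  have k2 : (- Y) * (- e) * a <= (- Y) * b * (- c).
    rewrite -mulrA -[X in _ <= X]mulrA; apply: ler_wpM2l; first lra.
    by rewrite [b * _]mulrC.
  have : X * a * (- c) <= (- Y) * b * (- c) by lra.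
  move=> hh; have : X * a <= (- Y) * b by nra.
  lra.
Qed.

Lemma g_un_cont X Y d a b c e Bn : -d <= X -> Y <= d -> 0 <= d ->
  -Bn <= a -> a <= b -> b <= 0 ->
  -Bn <= c -> c <= -1 -> 1 <= e -> 0 <= X * c + Y * e ->
  X * a + Y * b <= (Bn * Bn + 2 * Bn) * d.
Proof.
move=> hX hY hd ha hab hb hc0 hc he hnl.
have hB : 0 <= Bn by lra.
have e1 := h1 hX hd ha (le_trans hab hb).
have e1' := h1 hX hd hc0 (le_trans hc (lerN10 _)).
have : 0 <= Bn * d by nra.
have : Y * b <= Bn * Bn * d.
  case: (lerP 0 Y) => hY0; first by nra.
  have : - Y <= Bn * d by nra.
  have : (- Y) * (- b) <= (- Y) * Bn by nra.
  nra.
lra.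
Qed.

Lemma g_un_fr X Y d a b c e Bn : -d <= X -> Y <= d -> 0 <= d ->
  -Bn <= a -> a <= b -> b <= 0 ->
  1 <= c -> c <= e -> 0 <= X * c + Y * e ->
  X * a + Y * b <= (Bn * Bn + 2 * Bn) * d.
Proof.
move=> hX hY hd ha hab hb hc hce hnl.
have hB : 0 <= Bn by lra.
have e1 := h1 hX hd ha (le_trans hab hb).
have : 0 <= Bn * Bn * d by apply: mulr_ge0 => //; nra.
case: (lerP 0 Y) => hY0; first by nra.
have hX0 : 0 < X by nra.
(* (-Y) e <= X c ; want (-Y)(-b) <= X (-a) *)
have k1 : (- Y) * e * (- b) <= X * c * (- b) by apply: ler_wpM2r; lra.
have k2a : c * (- b) <= (- a) * e by nra.
have k2 : X * c * (- b) <= X * (- a) * e.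
  by rewrite -mulrA -[X in _ <= X]mulrA; apply: ler_wpM2l; lra.
have : (- Y) * (- b) * e <= X * (- a) * e by lra.
move=> hh; have : (- Y) * (- b) <= X * (- a) by nra.
have : 0 <= Bn * d by nra.
lra.
Qed.

End Ar.

Section Ar2.
Variable R : realFieldType.
Implicit Types X Y d a b c e Bn eta t x : R.

Lemma g_lower X Y d eta a b Bn : X <= eta -> -eta <= Y -> d - eta <= Y - X ->
  0 <= eta -> -Bn <= a -> a <= -1 -> 1 <= b -> b <= Bn ->
  (1 + 2 * Bn) * eta <= d / 2 -> d / 2 <= X * a + Y * b.
Proof.
move=> hX hY hYX he ha1 ha2 hb1 hb2 hk.
have hB : 1 <= Bn by lra.
have k1 : - X - Bn * eta <= X * a.
  case: (lerP X 0) => hX0.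
  - have : 0 <= (- X) * (- a - 1) by apply: mulr_ge0; lra.
    have : 0 <= Bn * eta by apply: mulr_ge0; lra.
    lra.
  - have : 0 <= X * (a + Bn) by apply: mulr_ge0; lra.
    have : 0 <= Bn * (eta - X) by apply: mulr_ge0; lra.
    lra.
have k2 : Y - Bn * eta <= Y * b.
  case: (lerP 0 Y) => hY0.
  - have : 0 <= Y * (b - 1) by apply: mulr_ge0; lra.
    have : 0 <= Bn * eta by apply: mulr_ge0; lra.
    lra.
  - have : 0 <= (- Y) * (Bn - b) by apply: mulr_ge0; lra.
    have : 0 <= Bn * (eta + Y) by apply: mulr_ge0; lra.
    lra.
lra.
Qed.

Lemma sq_le1 t x : 0 <= t -> t <= x -> t ^+ 2 <= x ^+ 2.
Proof. by move=> *; rewrite !expr2; nra. Qed.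

Lemma sq_le2 t x : 0 <= t -> x <= - t -> t ^+ 2 <= x ^+ 2.
Proof. by move=> *; rewrite !expr2; nra. Qed.

Lemma conv01 c a b : 0 <= c <= 1 -> 0 <= a <= 1 -> 0 <= b <= 1 ->
  0 <= c * a + (1 - c) * b <= 1.
Proof.
move=> /andP[c0 c1] /andP[a0 a1] /andP[b0 b1].
have : 0 <= c * a by apply: mulr_ge0.
have : 0 <= (1 - c) * b by apply: mulr_ge0; lra.
have : 0 <= c * (1 - a) by apply: mulr_ge0; lra.
have : 0 <= (1 - c) * (1 - b) by apply: mulr_ge0; lra.
move=> *; apply/andP; split; lra.
Qed.

Lemma meanL_core (nF nU nD Nr aF aU mu g q : R) : nD = Nr - nF - nU ->
  nF <= aF * Nr -> aU * Nr < nU + 1 -> 0 <= q <= 1 ->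
  aF + (1 - aF - aU) * q = mu - g -> 2 <= g * Nr ->
  nF + nD * q <= mu * Nr - g / 2 * Nr.
Proof.
move=> hD hF hU /andP[q0 q1] hq hg.
have : 0 <= (aF * Nr - nF) * (1 - q) by apply: mulr_ge0; lra.
have : 0 <= (nU + 1 - aU * Nr) * q by apply: mulr_ge0; lra.
have : Nr * (aF + (1 - aF - aU) * q) = Nr * (mu - g) by rewrite hq.
rewrite hD; move=> *; lra.
Qed.

Lemma meanH_core (nF nU nD Nr aF aU mu g q : R) : nD = Nr - nF - nU ->
  aF * Nr < nF + 1 -> nU <= aU * Nr -> 0 <= q <= 1 ->
  aF + (1 - aF - aU) * q = mu + g -> 2 <= g * Nr ->
  mu * Nr + g / 2 * Nr <= nF + nD * q.
Proof.
move=> hD hF hU /andP[q0 q1] hq hg.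
have : 0 <= (nF - aF * Nr + 1) * (1 - q) by apply: mulr_ge0; lra.
have : 0 <= (aU * Nr - nU) * q by apply: mulr_ge0; lra.
have : Nr * (aF + (1 - aF - aU) * q) = Nr * (mu + g) by rewrite hq.
rewrite hD; move=> *; lra.
Qed.

Lemma core2 (PL PH lL lH mL mH eta dl a b Bn : R) : 0 < PL -> 0 < PH -> PL + PH = 1 ->
  0 <= lL -> lH <= 1 -> 0 <= mL -> mH <= 1 -> mL <= eta -> 1 - mH <= eta ->
  0 <= eta -> PL * (1 - lL) + PH * lH <= 1 - dl -> (1 + 2 * Bn) * eta <= dl / 2 ->
  -Bn <= a -> a <= -1 -> 1 <= b -> b <= Bn ->
  dl / 2 <= PL * (mL - lL) * a + PH * (mH - lH) * b.
Proof.
move=> hPL hPH hpr lL0 lH1 mL0 mH1 hmL hmH eta0 hfid heta ha1 ha2 hb1 hb2.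
have f1 : 0 <= PL * (eta - mL) by apply: mulr_ge0; lra.
have f2 : 0 <= (1 - PL) * eta by apply: mulr_ge0; lra.
have f3 : 0 <= PL * lL by apply: mulr_ge0; lra.
have f4 : 0 <= PH * (mH - 1 + eta) by apply: mulr_ge0; lra.
have f5 : 0 <= PH * (1 - lH) by apply: mulr_ge0; lra.
have f6 : 0 <= (1 - PH) * eta by apply: mulr_ge0; lra.
have f7 : PL * eta + PH * eta = eta by rewrite -mulrDl hpr mul1r.
apply: (g_lower (eta := eta) (Bn := Bn)) => //; lra.
Qed.

Lemma core1 (PL PH lL lH mL mH : R) : 0 < PL -> 0 < PH -> PL + PH = 1 ->
  0 <= lL -> lH <= 1 -> 0 <= mL -> mH <= 1 ->
  [/\ 0 <= 1 - (PL * (1 - lL) + PH * lH),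
      - (1 - (PL * (1 - lL) + PH * lH)) <= PL * (mL - lL) &
      PH * (mH - lH) <= 1 - (PL * (1 - lL) + PH * lH)].
Proof.
move=> hPL hPH hpr lL0 lH1 mL0 mH1.
have e1 : 0 <= PL * lL by apply: mulr_ge0; lra.
have e2 : 0 <= PL * mL by apply: mulr_ge0; lra.
have e3 : 0 <= PH * (1 - lH) by apply: mulr_ge0; lra.
have e4 : 0 <= PH * (1 - mH) by apply: mulr_ge0; lra.
split; lra.
Qed.


Lemma lin1 a b c t : a <= b -> c <= a - t -> t <= b - c. Proof. lra. Qed.
Lemma lin2 a b c t : b < a -> a + t <= c -> b - c <= - t. Proof. lra. Qed.
Lemma lin3 (nD N nF nU aF aU : R) : nD = N - nF - nU -> nF <= aF * N -> nU <= aU * N ->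
  0 < (1 - aF - aU) * N -> 0 < nD.
Proof. lra. Qed.
Lemma lin4 dl x y : 0 < dl -> dl / 2 <= y - x -> x + dl / 4 < y. Proof. lra. Qed.
Lemma lin5 dl x y : 0 < dl -> dl / 2 <= y - x -> x <= y. Proof. lra. Qed.
Lemma lin6 : ~ ((2 : R) <= 0). Proof. lra. Qed.
End Ar2.

Lemma choose_strat (R : realFieldType) (mu aF aU PhL PhH : R) :
  0 <= aF -> 0 <= aU -> aF < mu -> aU < 1 - mu ->
  0 <= PhL -> PhH <= 1 -> PhL < PhH ->
  exists s0 s1 g, [/\ 0 <= s0 <= 1, 0 <= s1 <= 1, 0 < g,
    aF + (1 - aF - aU) * (PhL * s1 + (1 - PhL) * s0) = mu - g &
    aF + (1 - aF - aU) * (PhH * s1 + (1 - PhH) * s0) = mu + g].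
Proof.
move=> haF haU hFm hUm hL hH hLH.
set c := 1 - aF - aU.
have hc : 0 < c by rewrite /c; lra.
set t := (mu - aF) / c.
have ct : c * t = mu - aF by rewrite /t mulrC divfK //; apply: lt0r_neq0.
have t0 : 0 < t by rewrite /t divr_gt0 //; lra.
have t1 : t < 1 by rewrite /t ltr_pdivrMr // mul1r /c; lra.
set k := t * (1 - t).
have k0 : 0 < k by rewrite /k mulr_gt0 //; lra.
have kt : k <= t by rewrite /k; nra.
have kt1 : k <= 1 - t by rewrite /k; nra.
set m := (PhL + PhH) / 2.
have m0 : 0 <= m by rewrite /m; lra.
have m1 : m <= 1 by rewrite /m; lra.
exists (t - k * m), (t - k * m + k), (c * k * (PhH - PhL) / 2).
have km : k * m <= k by nra.
have km0 : 0 <= k * m by nra.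
split.
- apply/andP; split; lra.
- apply/andP; split; [lra|].
  have : k * (1 - m) <= k by nra.
  lra.
- apply: divr_gt0 => //; apply: mulr_gt0; [exact: mulr_gt0 | lra].
- rewrite /m; have := ct; lra.
- rewrite /m; have := ct; lra.
Qed.


Section M.
Variables (R : realType) (mu PL PH PhL PhH : R).
Definition sig_ok := [/\ 0 <= PhL, PhH <= 1 & PhL < PhH].

Definition al (vv : utility_fn) : R := (vv L Acc)%:R - (vv L Rej)%:R.
Definition be (vv : utility_fn) : R := (vv H Acc)%:R - (vv H Rej)%:R.

Lemma Ph01 w : sig_ok -> 0 <= Ph PhL PhH w <= 1.
Proof. by case=> *; case: w => /=; apply/andP; split; lra. Qed.

Lemma pvote01 N (s : profile R N) w : sig_ok -> valid_profile s ->
  unit01 (fun i => pvoteA PhL PhH w (s i)).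
Proof.
move=> hs hv i; rewrite /pvoteA; have /andP[c0 c1] := Ph01 w hs.
have /andP[a0 a1] := hv i true; have /andP[b0 b1] := hv i false.
set a := s i true in a0 a1 *; set b := s i false in b0 b1 *; set c := Ph PhL PhH w in c0 c1 *.
have : 0 <= c * a by apply: mulr_ge0.
have : 0 <= (1 - c) * b by apply: mulr_ge0; lra.
have : 0 <= c * (1 - a) by apply: mulr_ge0; lra.
have : 0 <= (1 - c) * (1 - b) by apply: mulr_ge0; lra.
move=> *; apply/andP; split; lra.
Qed.

Lemma lam_Fk N (s : profile R N) w :
  lambdaA mu PhL PhH s w = Fk (mu * N%:R) (fun i => pvoteA PhL PhH w (s i)).
Proof. by []. Qed.

Lemma lam01 N (s : profile R N) w : sig_ok -> valid_profile s ->
  0 <= lambdaA mu PhL PhH s w <= 1.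
Proof.
by move=> hs hv; rewrite lam_Fk Fk_ge0 ?Fk_le1 //; exact: pvote01.
Qed.

Lemma util_diff N (v : 'I_N -> utility_fn) (s s' : profile R N) n :
  exp_util mu PL PH PhL PhH v s' n - exp_util mu PL PH PhL PhH v s n =
  PL * (lambdaA mu PhL PhH s' L - lambdaA mu PhL PhH s L) * al (v n) +
  PH * (lambdaA mu PhL PhH s' H - lambdaA mu PhL PhH s H) * be (v n).
Proof. rewrite /exp_util !big_cons !big_nil /= /lambdaR /al /be; ring. Qed.

Lemma nat_lt1 (a b : nat) : (a < b)%N -> (a%:R + 1 <= b%:R :> R).
Proof. by move=> h; rewrite natr1 ler_nat. Qed.

Lemma cont_ab vv : contingent vv -> al vv <= -1 /\ 1 <= be vv.
Proof.
case=> /nat_lt1 h1 /nat_lt1 h2; rewrite /al /be; split; lra.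
Qed.

Lemma fr_ab vv : friendly vv -> 1 <= al vv /\ al vv <= be vv.
Proof.
case=> /nat_lt1 h1 [/nat_lt1 h2 /nat_lt1 h3]; rewrite /al /be; split; lra.
Qed.

Lemma un_ab vv : unfriendly vv -> al vv <= be vv /\ be vv <= -1.
Proof.
case=> /nat_lt1 h1 [/nat_lt1 h2 /nat_lt1 h3]; rewrite /al /be; split; lra.
Qed.

Lemma bnd_ab (B : nat) vv : (forall w a, (vv w a <= B)%N) ->
  [/\ - B%:R <= al vv, al vv <= B%:R, - B%:R <= be vv & be vv <= B%:R].
Proof.
move=> hb; rewrite /al /be.
have h0 w a : 0 <= (vv w a)%:R :> R by [].
have hB w a : (vv w a)%:R <= B%:R :> R by rewrite ler_nat.
have := h0 L Acc; have := h0 L Rej; have := h0 H Acc; have := h0 H Rej.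
have := hB L Acc; have := hB L Rej; have := hB H Acc; have := hB H Rej.
move=> *; split; lra.
Qed.


Lemma mono_lam N (s s' : profile R N) w : sig_ok -> valid_profile s -> valid_profile s' ->
  (forall n, pvoteA PhL PhH w (s n) <= pvoteA PhL PhH w (s' n)) ->
  lambdaA mu PhL PhH s w <= lambdaA mu PhL PhH s' w.
Proof.
move=> hs hv hv' hle; rewrite !lam_Fk; apply: Fk_mono => //; exact: pvote01.
Qed.

Lemma part1_N (B : nat) N (v : 'I_N -> utility_fn) (s : profile R N) :
  0 < PL -> 0 < PH -> PL + PH = 1 -> sig_ok ->
  (forall n w a, (v n w a <= B)%N) ->
  (forall n, friendly (v n) \/ unfriendly (v n) \/ contingent (v n)) ->
  valid_profile s -> regular v s ->
  strong_BNE mu PL PH PhL PhH v s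
    ((B%:R * B%:R + 2 * B%:R) * (1 - fidelity mu PL PH PhL PhH s)).
Proof.
move=> hPL hPH hpr hs hb ht hv hreg [D [s' [hv' hout hnl [g gD hg]]]].
have /andP[lL0 lL1] := lam01 L hs hv.
have /andP[lH0 lH1] := lam01 H hs hv.
have /andP[mL0 mL1] := lam01 L hs hv'.
have /andP[mH0 mH1] := lam01 H hs hv'.
have hle1 w : (forall n, n \in D -> friendly (v n)) ->
    lambdaA mu PhL PhH s' w <= lambdaA mu PhL PhH s w.
  move=> hF; apply: mono_lam => // n; case: (boolP (n \in D)) => nD.
  - have h1 := (hreg n).1 (hF n nD).
    have /andP[_ hle1] := pvote01 w hs hv' n.
    have -> : pvoteA PhL PhH w (s n) = 1 by rewrite /pvoteA !h1; ring.
    exact: hle1.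
  - by rewrite hout.
have hle2 w : (forall n, n \in D -> unfriendly (v n)) ->
    lambdaA mu PhL PhH s w <= lambdaA mu PhL PhH s' w.
  move=> hU; apply: mono_lam => // n; case: (boolP (n \in D)) => nD.
  - have h1 := (hreg n).2 (hU n nD).
    have /andP[hle0 _] := pvote01 w hs hv' n.
    have -> : pvoteA PhL PhH w (s n) = 0 by rewrite /pvoteA !h1; ring.
    exact: hle0.
  - by rewrite hout.
have gain n : exp_util mu PL PH PhL PhH v s' n - exp_util mu PL PH PhL PhH v s n =
    PL * (lambdaA mu PhL PhH s' L - lambdaA mu PhL PhH s L) * al (v n) +
    PH * (lambdaA mu PhL PhH s' H - lambdaA mu PhL PhH s H) * be (v n)
  by rewrite util_diff.
have nl n : n \in D -> 0 <= PL * (lambdaA mu PhL PhH s' L - lambdaA mu PhL PhH s L) * al (v n) +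
    PH * (lambdaA mu PhL PhH s' H - lambdaA mu PhL PhH s H) * be (v n).
  by move=> nD; rewrite -gain subr_ge0; exact: hnl.
have hg' : exp_util mu PL PH PhL PhH v s g + (B%:R * B%:R + 2 * B%:R) *
    (1 - (PL * (1 - lambdaA mu PhL PhH s L) + PH * lambdaA mu PhL PhH s H)) <
    exp_util mu PL PH PhL PhH v s' g := hg.
have gg := gain g.
have monoF : (forall n, n \in D -> friendly (v n)) -> PL * (lambdaA mu PhL PhH s' L - lambdaA mu PhL PhH s L) <= 0 /\ PH * (lambdaA mu PhL PhH s' H - lambdaA mu PhL PhH s H) <= 0.
  move=> hF; split; apply: mulr_ge0_le0.
  - exact: ltW hPL.
  - by rewrite subr_le0; exact: hle1 L hF.
  - exact: ltW hPH.
  - by rewrite subr_le0; exact: hle1 H hF.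
have monoU : (forall n, n \in D -> unfriendly (v n)) -> 0 <= PL * (lambdaA mu PhL PhH s' L - lambdaA mu PhL PhH s L) /\ 0 <= PH * (lambdaA mu PhL PhH s' H - lambdaA mu PhL PhH s H).
  move=> hU; split; apply: mulr_ge0.
  - exact: ltW hPL.
  - by rewrite subr_ge0; exact: hle2 L hU.
  - exact: ltW hPH.
  - by rewrite subr_ge0; exact: hle2 H hU.
clear hle1 hle2.
have [ga1 ga2 gb1 gb2] := bnd_ab (hb g).
have hB : 0 <= B%:R :> R by [].
clear hg hnl gain hout hreg.
move: monoF monoU nl gg hg' lL0 lL1 lH0 lH1 mL0 mL1 mH0 mH1.
move: (lambdaA mu PhL PhH s L) (lambdaA mu PhL PhH s H)
  (lambdaA mu PhL PhH s' L) (lambdaA mu PhL PhH s' H) => lL lH mL mH.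
move: (exp_util mu PL PH PhL PhH v s g) (exp_util mu PL PH PhL PhH v s' g) => u1 u2.
move=> monoF monoU nl gg hg' lL0 lL1 lH0 lH1 mL0 mL1 mH0 mH1.
have [hd0 hX hY] := core1 hPL hPH hpr lL0 lH1 mL0 mH1.
move: hd0 hX hY nl hg' monoF monoU gg.
move: (1 - (PL * (1 - lL) + PH * lH)) (PL * (mL - lL)) (PH * (mH - lH)) => d X Y.
move=> hd0 hX hY nl hg' monoF monoU gg.
have hK : 0 <= (B%:R * B%:R + 2 * B%:R) * d.
  by apply: mulr_ge0 => //; try (apply: addr_ge0; apply: mulr_ge0).
suff key : X * al (v g) + Y * be (v g) <= (B%:R * B%:R + 2 * B%:R) * d.
  by clear -gg hg' key; lra.
case: (ht g) => [hgF | [hgU | hgC]].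
- have [fa fb] := fr_ab hgF.
  have fa0 : 0 <= al (v g) := le_trans ler01 fa.
  case: (pselect (exists2 c, c \in D & contingent (v c))) => [[c cD hc] | nc].
    have [ca cb] := cont_ab hc; have [_ _ _ cb2] := bnd_ab (hb c).
    exact: (g_fr_cont hX hY hd0 fa0 ga2 (le_trans fa0 fb) gb2 ca cb cb2 (nl c cD)).
  case: (pselect (exists2 c, c \in D & unfriendly (v c))) => [[c cD hc] | nu].
    have [ca cb] := un_ab hc.
    exact: (g_fr_un hX hY hd0 fa0 fb gb2 ca cb (nl c cD)).
  have [hX0 hY0] : X <= 0 /\ Y <= 0.
    apply: monoF => n nD; case: (ht n) => [// | [hn | hn]].
    - by exfalso; apply: nu; exists n.
    - by exfalso; apply: nc; exists n.
  have k1 : X * al (v g) <= 0 by apply: mulr_le0_ge0.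
  have k2 : Y * be (v g) <= 0 by apply: mulr_le0_ge0 => //; exact: le_trans fa0 fb.
  by clear -k1 k2 hK; lra.
- have [ua ub] := un_ab hgU.
  have ub0 : be (v g) <= 0 := le_trans ub (lerN10 _).
  case: (pselect (exists2 c, c \in D & contingent (v c))) => [[c cD hc] | nc].
    have [ca cb] := cont_ab hc; have [ca2 _ _ _] := bnd_ab (hb c).
    exact: (g_un_cont hX hY hd0 ga1 ua ub0 ca2 ca cb (nl c cD)).
  case: (pselect (exists2 c, c \in D & friendly (v c))) => [[c cD hc] | nf].
    have [ca cb] := fr_ab hc.
    exact: (g_un_fr hX hY hd0 ga1 ua ub0 ca cb (nl c cD)).
  have [hX0 hY0] : 0 <= X /\ 0 <= Y.
    apply: monoU => n nD; case: (ht n) => [hn | [// | hn]].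
    - by exfalso; apply: nf; exists n.
    - by exfalso; apply: nc; exists n.
  have k1 : X * al (v g) <= 0 by apply: mulr_ge0_le0 => //; exact: le_trans ua ub0.
  have k2 : Y * be (v g) <= 0 by apply: mulr_ge0_le0.
  by clear -k1 k2 hK; lra.
- have [ca cb] := cont_ab hgC.
  exact: (g_cont hX hY hd0 ga1 (le_trans ca (lerN10 _)) (le_trans ler01 cb) gb2).
Qed.

Lemma sum_ind N (A : {set 'I_N}) : \sum_(n : 'I_N) ((n \in A)%:R : R) = #|A|%:R.
Proof.
rewrite -sum1_card natr_sum [RHS]big_mkcond /=; apply: eq_bigr => n _.
by case: (n \in A).
Qed.

Lemma excl vv : friendly vv -> unfriendly vv -> False.
Proof.
case=> h1 [h2 h3] [u1 [u2 u3]].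
have := ltn_trans (ltn_trans u3 u2) u1.
by rewrite ltnNge (ltnW h2).
Qed.

Lemma part2_N (aF aU : R) (B N : nat) (v : 'I_N -> utility_fn) (s : profile R N)
  (s0 s1 g dl : R) :
  0 < PL -> 0 < PH -> PL + PH = 1 -> sig_ok ->
  instance_ok aF aU B v -> valid_profile s -> regular v s ->
  0 <= s0 <= 1 -> 0 <= s1 <= 1 -> 0 < g ->
  aF + (1 - aF - aU) * (PhL * s1 + (1 - PhL) * s0) = mu - g ->
  aF + (1 - aF - aU) * (PhH * s1 + (1 - PhH) * s0) = mu + g ->
  aF + aU < 1 -> 0 <= aF -> 0 <= aU ->
  0 < dl -> fidelity mu PL PH PhL PhH s <= 1 - dl ->
  2 <= g * N%:R ->
  (1 + 2 * B%:R) * (N%:R / (g / 2 * N%:R) ^+ 2) <= dl / 2 ->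
  ~ strong_BNE mu PL PH PhL PhH v s (dl / 4).
Proof.
move=> hPL hPH hpr hs [hb [hbu [ht [hFc hUc]]]] hv hreg hs0 hs1
  hg hqL hqH hc haF haU hdl hfid hgN heta.
set Fs := [set n : 'I_N | `[< friendly (v n) >]]%SET.
set Us := [set n : 'I_N | `[< unfriendly (v n) >]]%SET.
set D := ~: (Fs :|: Us).
have inD n : (n \in D) = (n \notin Fs) && (n \notin Us) by rewrite !inE negb_or.
have Dcont n : n \in D -> contingent (v n).
  rewrite inD !inE => /andP [/asboolPn hf /asboolPn hu].
  by case: (ht n) => [//|[//|//]].
have cardD : (#|D| + #|Fs| + #|Us| = N)%N.
  have h1 := cardsC (Fs :|: Us); rewrite card_ord in h1.
  have h2 := cardsU Fs Us.
  have h3 : Fs :&: Us = finset.set0.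
    apply/setP => n; rewrite !inE; apply/negP => /andP [/asboolP a /asboolP b].
    exact: excl a b.
  rewrite h3 cards0 subn0 in h2.
  apply: etrans h1; by rewrite h2 [RHS]addnC addnA.
have hnD : (#|D|%:R : R) = N%:R - #|Fs|%:R - #|Us|%:R.
  have h := congr1 (fun n : nat => n%:R : R) cardD; rewrite /= !natrD in h.
  by rewrite -h; ring.
have hnF : (#|Fs|%:R : R) = (Num.floor (aF * N%:R))%:~R by rewrite -hFc pmulrn.
have hnU : (#|Us|%:R : R) = (Num.floor (aU * N%:R))%:~R by rewrite -hUc pmulrn.
have fF1 := floor_le (aF * N%:R); have fF2 := floorD1_gt (aF * N%:R).
have fU1 := floor_le (aU * N%:R); have fU2 := floorD1_gt (aU * N%:R).
rewrite intrD -hnF in fF1 fF2; rewrite intrD -hnU in fU1 fU2.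
pose st := fun b : bool => if b then s1 else s0.
pose s' : profile R N := fun n => if n \in D then st else s n.
have hv' : valid_profile s'.
  move=> n b; rewrite /s'; case: ifP => _; last exact: hv.
  by rewrite /st; case: b.
pose q w := Ph PhL PhH w * s1 + (1 - Ph PhL PhH w) * s0.
have pE w n : pvoteA PhL PhH w (s' n) = (n \in Fs)%:R + (n \in D)%:R * q w.
  rewrite /s'; case: (boolP (n \in Fs)) => hF.
  - have nnD : n \notin D by rewrite inD hF.
    rewrite (negbTE nnD) /=; move: hF; rewrite inE => /asboolP hF.
    have h1 := (hreg n).1 hF.
    by rewrite /pvoteA !h1; ring.
  - case: (boolP (n \in Us)) => hU.
    + have nnD : n \notin D by rewrite inD hU andbF.
      rewrite (negbTE nnD) /=; move: hU; rewrite inE => /asboolP hU.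
      have h1 := (hreg n).2 hU.
      by rewrite /pvoteA !h1; ring.
    + have nnD : n \in D by rewrite inD hF hU.
      by rewrite nnD /= /pvoteA /q /st; ring.
have meanE w : \sum_n pvoteA PhL PhH w (s' n) = #|Fs|%:R + #|D|%:R * q w.
  under eq_bigr do rewrite pE.
  by rewrite big_split /= -mulr_suml !sum_ind.
have hq01 w : 0 <= q w <= 1 by apply: conv01 => //; exact: Ph01.
have hNr : 0 < N%:R :> R.
  rewrite ltr0n lt0n; apply/eqP => hN0; move: hgN; rewrite hN0 mulr0n mulr0.
  exact: lin6.
have meanL : #|Fs|%:R + #|D|%:R * q L <= mu * N%:R - g / 2 * N%:R.
  exact: (meanL_core hnD fF1 (fU2 : _ < _ + 1) (hq01 L) hqL hgN).
have meanH : mu * N%:R + g / 2 * N%:R <= #|Fs|%:R + #|D|%:R * q H.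
  exact: (meanH_core hnD (fF2 : _ < _ + 1) fU1 (hq01 H) hqH hgN).
have ht0 : 0 < g / 2 * N%:R by apply: mulr_gt0 => //; apply: divr_gt0.
have hpL := pvote01 L hs hv'.
have hpH := pvote01 H hs hv'.
have Vle w : \sum_n pvoteA PhL PhH w (s' n) * (1 - pvoteA PhL PhH w (s' n)) <= N%:R.
  by have := var_le (pvote01 w hs hv'); rewrite card_ord.
have eta0 : 0 <= N%:R / (g / 2 * N%:R) ^+ 2.
  by apply: divr_ge0; [exact: ltW | apply: exprn_ge0; exact: ltW].
have lamL : lambdaA mu PhL PhH s' L <= N%:R / (g / 2 * N%:R) ^+ 2.
  rewrite lam_Fk /Fk.
  apply: le_trans (cheb (P := fun S : {set 'I_N} => mu * N%:R <= #|S|%:R) hpL ht0 _) _.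
    move=> S /= hS; apply: sq_le1; first exact: ltW.
    by rewrite meanE; apply: lin1 hS meanL.
  apply: ler_wpM2r; first by rewrite invr_ge0 exprn_ge0 // ltW.
  exact: Vle.
have lamH : 1 - lambdaA mu PhL PhH s' H <= N%:R / (g / 2 * N%:R) ^+ 2.
  rewrite lam_Fk Fk_compl.
  apply: le_trans (cheb (P := fun S : {set 'I_N} => ~~ (mu * N%:R <= #|S|%:R)) hpH ht0 _) _.
    move=> S /= hS; apply: sq_le2; first exact: ltW.
    by rewrite -ltNge in hS; rewrite meanE; apply: lin2 hS meanH.
  apply: ler_wpM2r; first by rewrite invr_ge0 exprn_ge0 // ltW.
  exact: Vle.
have /andP[lL0 lL1] := lam01 L hs hv.
have /andP[lH0 lH1] := lam01 H hs hv.
have /andP[mL0 mL1] := lam01 L hs hv'.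
have /andP[mH0 mH1] := lam01 H hs hv'.
have hfid' : PL * (1 - lambdaA mu PhL PhH s L) + PH * lambdaA mu PhL PhH s H <= 1 - dl := hfid.
have gainD n : n \in D ->
    dl / 2 <= exp_util mu PL PH PhL PhH v s' n - exp_util mu PL PH PhL PhH v s n.
  move=> nD; rewrite util_diff.
  have [ca cb] := cont_ab (Dcont n nD).
  have [b1 b2 b3 b4] := bnd_ab (hb n).
  exact: (core2 hPL hPH hpr lL0 lH1 mL0 mH1 lamL lamH eta0 hfid' heta b1 ca cb b4).
move=> hBNE; apply: hBNE; exists D, s'; split => //.
- by move=> n hn; rewrite /s' (negbTE hn).
- by move=> n nD; apply: lin5 hdl (gainD n nD).
- have : 0 < (#|D|%:R : R).
    have : 0 < (1 - aF - aU) * N%:R by apply: mulr_gt0 => //; lra.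
    exact: lin3 hnD fF1 fU1.
  rewrite ltr0n => /card_gt0P [n0 n0D].
  by exists n0 => //; apply: lin4 hdl (gainD n0 n0D).
Qed.

End M.

Lemma lemN1 (R : realFieldType) (g dl K Nr : R) : 0 < g -> 0 < dl -> 0 <= K ->
  2 / g + 8 * K / (g ^+ 2 * dl) < Nr -> 2 <= g * Nr.
Proof.
move=> hg hdl hK h.
have h1 : 0 <= 8 * K / (g ^+ 2 * dl).
  by apply: divr_ge0; [lra | apply: mulr_ge0; [apply: exprn_ge0; lra | lra]].
have h2 : 2 / g < Nr by lra.
by move: h2; rewrite ltr_pdivrMr // mulrC => /ltW.
Qed.

Lemma lemN2 (R : realFieldType) (g dl K Nr : R) : 0 < g -> 0 < dl -> 0 <= K ->
  2 / g + 8 * K / (g ^+ 2 * dl) < Nr -> K * (Nr / (g / 2 * Nr) ^+ 2) <= dl / 2.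
Proof.
move=> hg hdl hK h.
have h0 : 0 < 2 / g by apply: divr_gt0.
have h1 : 0 <= 8 * K / (g ^+ 2 * dl).
  by apply: divr_ge0; [lra | apply: mulr_ge0; [apply: exprn_ge0; lra | lra]].
have hN : 0 < Nr by lra.
have hA : 8 * K / (g ^+ 2 * dl) < Nr by lra.
have hg2 : 0 < g ^+ 2 by apply: exprn_gt0.
rewrite ltr_pdivrMr in hA; last by apply: mulr_gt0.
have e1 : Nr / (g / 2 * Nr) ^+ 2 = 4 / (g ^+ 2 * Nr).
  by field; apply/andP; split; apply: lt0r_neq0.
rewrite e1 mulrA ler_pdivrMr; last by apply: mulr_gt0.
lra.
Qed.

Unset Implicit Arguments. Set Strict Implicit.
Theorem theorem2 (R : realType) (mu PL PH PhL PhH aF aU : R) (B : nat)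
  (hB : (0 < B)%N)
  (hPL : 0 < PL) (hPH : 0 < PH) (hprior : PL + PH = 1)
  (hPhL : 0 <= PhL) (hPhH : PhH <= 1) (hsig : PhL < PhH)
  (haF : 0 <= aF) (haU : 0 <= aU) (haC : aF + aU <= 1)
  (hFmu : aF < mu) (hUmu : aU < 1 - mu)
  (v : forall N : nat, 'I_N -> utility_fn)
  (sigma : forall N : nat, profile R N)
  (hinst : forall N, instance_ok aF aU B (v N))
  (hvalid : forall N, valid_profile (sigma N))
  (hreg : forall N, regular (v N) (sigma N)) :
  ((fun N => fidelity mu PL PH PhL PhH (sigma N)) @ \oo --> (1 : R) ->
     exists eps : nat -> R,
       (forall N, 0 <= eps N) /\ eps @ \oo --> (0 : R) /\
       forall N, strong_BNE mu PL PH PhL PhH (v N) (sigma N) (eps N))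
  /\
  (~ ((fun N => fidelity mu PL PH PhL PhH (sigma N)) @ \oo --> (1 : R)) ->
     exists2 eps : R, 0 < eps &
       forall M : nat, exists2 N : nat, (M <= N)%N &
         ~ strong_BNE mu PL PH PhL PhH (v N) (sigma N) eps).
Proof.
have hs : sig_ok PhL PhH by split.
have fid_le1 N : fidelity mu PL PH PhL PhH (sigma N) <= 1.
  have /andP[a0 a1] := lam01 mu L hs (hvalid N).
  have /andP[b0 b1] := lam01 mu H hs (hvalid N).
  have [h _ _] := core1 hPL hPH hprior a0 b1 a0 b1.
  by move: h; rewrite subr_ge0.
have hK : 0 <= (B%:R * B%:R + 2 * B%:R : R).
  by apply: addr_ge0; apply: mulr_ge0.
split.
- move=> hconv.
  exists (fun N => (B%:R * B%:R + 2 * B%:R) * (1 - fidelity mu PL PH PhL PhH (sigma N))).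
  split; [|split].
  + by move=> N; apply: mulr_ge0 => //; rewrite subr_ge0.
  + have -> : (0 : R) = (B%:R * B%:R + 2 * B%:R) * (1 - 1) by rewrite subrr mulr0.
    exact: cvgMl_tmp (cvgB (cvg_cst (1:R)) hconv).
  + move=> N; have [hb [hbu [ht _]]] := hinst N.
    exact: part1_N hPL hPH hprior hs hb ht (hvalid N) (hreg N).
- move=> hncv.
  have [dl hdl hinf] : exists2 dl : R, 0 < dl & forall M, exists2 N, (M <= N)%N &
      fidelity mu PL PH PhL PhH (sigma N) <= 1 - dl.
    case: (pselect (exists2 dl : R, 0 < dl & forall M, exists2 N, (M <= N)%N &
      fidelity mu PL PH PhL PhH (sigma N) <= 1 - dl)) => // hno; exfalso; apply: hncv.
    apply/cvgrPdist_le => e he.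
    have : ~ forall M, exists2 N, (M <= N)%N & fidelity mu PL PH PhL PhH (sigma N) <= 1 - e.
      by move=> hM; apply: hno; exists e.
    move/existsNP => [M hM].
    exists M => // N /= hMN.
    have : ~ (fidelity mu PL PH PhL PhH (sigma N) <= 1 - e) by move=> h; apply: hM; exists N.
    move/negP; rewrite -ltNge => h.
    rewrite ger0_norm ?subr_ge0 //; lra.
  have [s0 [s1 [g [hs0 hs1 hg hqL hqH]]]] := choose_strat haF haU hFmu hUmu hPhL hPhH hsig.
  exists (dl / 4); first by apply: divr_gt0.
  move=> M.
  set C := 2 / g + 8 * (1 + 2 * B%:R) / (g ^+ 2 * dl).
  have [N hN hfN] := hinf (maxn M (Num.truncn C).+1).
  exists N; first exact: leq_trans (leq_maxl _ _) hN.
  have hCN : C < N%:R.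
    apply: lt_le_trans (truncnS_gt C) _; rewrite ler_nat.
    exact: leq_trans (leq_maxr _ _) hN.
  have hK1 : 0 <= 1 + 2 * B%:R :> R by apply: addr_ge0 => //; apply: mulr_ge0.
  have hc : aF + aU < 1 by lra.
  have := part2_N hPL hPH hprior hs (hinst N) (hvalid N) (hreg N).
  move=> /(_ mu s0 s1 g dl hs0 hs1 hg hqL hqH hc haF haU hdl hfN).
  move=> /(_ (lemN1 hg hdl hK1 hCN)).
  move=> /(_ (lemN2 hg hdl hK1 hCN)).
  done.
Qed.
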